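(* For all $x>0$ and $p\le 1$, $$H(x,x^p)^3\le x^{p+1}A(x,x^p)\le L(x,x^p)^3.$$
   Context: For $a,b>0$: $H(a,b)=\frac{2ab}{a+b}$, $A(a,b)=\frac{a+b}{2}$, and $L(a,b)=\frac{a-b}{\log a-\log b}$ for $a\ne b$, $L(a,a)=a$. *)

(* Defs.v *)
From Stdlib Require Import Reals.
Open Scope R_scope.

Definition Hmean (a b : R) : R := 2 * a * b / (a + b).
Definition Amean (a b : R) : R := (a + b) / 2.
Definition Lmean (a b : R) : R :=
  if Req_EM_T a b then a else (a - b) / (ln a - ln b).

(* Main.v *)
Require Import Defs.
From Stdlib Require Import Reals.
Open Scope R_scope.
From Coquelicot Require Import Coquelicot.
From Stdlib Require Import Lra Psatz.

Definition Cf (x : R) := (exp x + exp (-x))/2.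
Definition Sf (x : R) := (exp x - exp (-x))/2.
Definition mf (x : R) := exp (ln (Cf x) / 3).
Definition ff (x : R) := Sf x / mf x - x.
Definition dff (x : R) := Cf x / mf x - Sf x * Sf x / (3 * Cf x * mf x) - 1.

Lemma Cf_pos x : 0 < Cf x.
Proof. unfold Cf. pose proof (exp_pos x). pose proof (exp_pos (-x)). lra. Qed.

Lemma mf_pos x : 0 < mf x.
Proof. apply exp_pos. Qed.

Lemma mf_cube x : mf x ^ 3 = Cf x.
Proof.
  unfold mf. simpl. rewrite Rmult_1_r, <- !exp_plus.
  replace (ln (Cf x) / 3 + (ln (Cf x) / 3 + ln (Cf x) / 3)) with (ln (Cf x)) by field.
  apply exp_ln, Cf_pos.
Qed.

Lemma exp_inv x : exp x * exp (-x) = 1.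
Proof. rewrite <- exp_plus. replace (x + - x) with 0 by ring. apply exp_0. Qed.

Lemma SC x : Sf x * Sf x = Cf x * Cf x - 1.
Proof. unfold Sf, Cf. pose proof (exp_inv x). nra. Qed.

Lemma ff_deriv x : is_derive ff x (dff x).
Proof.
  unfold ff, dff, mf, Sf.
  pose proof (Cf_pos x) as HC. unfold Cf in *.
  auto_derive.
  - split. lra. split. apply Rgt_not_eq, exp_pos. exact I.
  - unfold Rdiv in *. set (m := exp (ln ((exp x + exp (- x)) * / 2) * / 3)).
    assert (0 < m) by apply exp_pos.
    field. lra.
Qed.

Lemma dff_nonneg x : 0 <= dff x.
Proof.
  unfold dff. rewrite SC. rewrite <- (mf_cube x).
  pose proof (mf_pos x) as Hm. set (m := mf x) in *.
  assert (Hq : m ^ 3 / m - (m ^ 3 * m ^ 3 - 1) / (3 * m ^ 3 * m) - 1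
              = (m*m - 1)^2 * (2*m*m+1) / (3 * m^4)) by (field; lra).
  rewrite Hq. unfold Rdiv. apply Rmult_le_pos. apply Rmult_le_pos. apply pow2_ge_0. nra. apply Rlt_le, Rinv_0_lt_compat. apply Rmult_lt_0_compat; [lra| apply pow_lt; lra].
Qed.

Lemma key u : 0 <= u -> u ^ 3 * Cf u <= Sf u ^ 3.
Proof.
  intro Hu.
  destruct (Req_dec u 0) as [H0|H0].
  { subst. unfold Sf, Cf. rewrite Ropp_0, exp_0. lra. }
  destruct (MVT_gen ff 0 u dff) as [c [Hc Heq]].
  - intros; apply ff_deriv.
  - intros y _. apply continuity_pt_filterlim. apply (ex_derive_continuous (K:=R_AbsRing) (V:=R_NormedModule)).
    eexists; apply ff_deriv.
  - assert (Hf0 : ff 0 = 0).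
    { unfold ff, Sf. rewrite Ropp_0. replace (exp 0 - exp 0) with 0 by ring. unfold Rdiv. ring. }
    rewrite Hf0 in Heq.
    pose proof (dff_nonneg c).
    assert (0 <= ff u) by nra.
    unfold ff in H1.
    pose proof (mf_pos u).
    assert (u * mf u <= Sf u).
    { assert (Sf u / mf u * mf u = Sf u) by (field; lra). nra. }
    rewrite <- (mf_cube u).
    assert (0 <= u * mf u) by nra.
    replace (u ^ 3 * mf u ^ 3) with ((u * mf u) ^ 3) by ring.
    apply pow_incr. lra.
Qed.

Lemma Lcore a b : 0 < b -> b < a ->
  a * b * ((a + b) / 2) <= ((a - b) / (ln a - ln b)) ^ 3.
Proof.
  intros Hb Hab.
  assert (Hl : ln b < ln a) by (apply ln_increasing; lra).
  set (u := (ln a - ln b) / 2).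
  assert (Hu : 0 < u) by (unfold u; lra).
  set (e := exp u).
  assert (He : 0 < e) by apply exp_pos.
  assert (Hei : exp (- u) = / e).
  { unfold e. rewrite exp_Ropp. reflexivity. }
  assert (Ha : a = b * e * e).
  { unfold e. rewrite Rmult_assoc, <- exp_plus. replace (u + u) with (ln a - ln b) by (unfold u; field).
    unfold Rminus. rewrite exp_plus, exp_Ropp, !exp_ln by lra. field. lra. }
  pose proof (key u (Rlt_le _ _ Hu)) as K.
  unfold Cf, Sf in K. rewrite Hei in K. fold e in K.
  replace (ln a - ln b) with (2 * u) by (unfold u; field).
  assert (K' : 4 * u ^ 3 * e ^ 2 * (e ^ 2 + 1) <= (e * e - 1) ^ 3).
  { assert (Heq1 : 4 * u ^ 3 * e ^ 2 * (e ^ 2 + 1) = 8 * e^3 * (u ^ 3 * ((e + / e) / 2))) by (field; lra).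
    assert (Heq2 : (e * e - 1) ^ 3 = 8 * e^3 * (((e - / e) / 2) ^ 3)) by (field; lra).
    rewrite Heq1, Heq2. apply Rmult_le_compat_l. pose proof (pow_lt e 3 He). lra. exact K. }
  rewrite Ha.
  assert (Heq3 : ((b * e * e - b) / (2 * u)) ^ 3 = b^3 / (8 * u^3) * (e * e - 1) ^ 3) by (field; lra).
  assert (Heq4 : b * e * e * b * ((b * e * e + b) / 2) = b^3 / (8 * u^3) * (4 * u ^ 3 * e ^ 2 * (e ^ 2 + 1))) by (field; lra).
  rewrite Heq3, Heq4. apply Rmult_le_compat_l; [|exact K'].
  unfold Rdiv. apply Rmult_le_pos. apply Rlt_le, pow_lt; lra.
  apply Rlt_le, Rinv_0_lt_compat. pose proof (pow_lt u 3 Hu). lra.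
Qed.

Lemma Lgen a b : 0 < a -> 0 < b -> a * b * Amean a b <= Lmean a b ^ 3.
Proof.
  intros Ha Hb. unfold Lmean, Amean.
  destruct (Req_EM_T a b) as [E|E].
  - subst. assert (b * b * ((b + b) / 2) = b ^ 3) by field. lra.
  - destruct (Rlt_or_le b a) as [H|H].
    + apply Lcore; lra.
    + assert (Eq1 : (a - b) / (ln a - ln b) = (b - a) / (ln b - ln a)).
      { assert (ln a <> ln b) by (intro Q; apply E, ln_inv; lra).
        field. split; intro; apply H0; lra. }
      rewrite Eq1.
      rewrite (Rmult_comm a b), (Rplus_comm a b).
      apply Lcore; lra.
Qed.

Lemma Hgen a b : 0 < a -> 0 < b -> Hmean a b ^ 3 <= a * b * Amean a b.
Proof.
  intros Ha Hb. unfold Hmean, Amean.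
  set (s := a + b). assert (Hs : 0 < s) by (unfold s; lra).
  assert (Q : a * b * (s / 2) - (2 * a * b / s) ^ 3 = a * b * ((s^4 - 16 * (a*b)^2) / (2 * s^3))) by (field; lra).
  assert (0 <= a * b * ((s^4 - 16 * (a*b)^2) / (2 * s^3))).
  { apply Rmult_le_pos. nra. unfold Rdiv. apply Rmult_le_pos.
    assert (s^2 >= 4*(a*b)) by (unfold s; pose proof (pow2_ge_0 (a-b)); nra).
    assert (0 <= a*b) by nra.
    replace (s^4 - 16 * (a*b)^2) with ((s^2 - 4*(a*b)) * (s^2 + 4*(a*b))) by ring.
    apply Rmult_le_pos; nra.
    apply Rlt_le, Rinv_0_lt_compat. pose proof (pow_lt s 3 Hs). lra. }
  lra.
Qed.

Theorem mainTheorem8 (x p : R) (hx : 0 < x) (hp : p <= 1) :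
  Hmean x (Rpower x p) ^ 3 <= Rpower x (p + 1) * Amean x (Rpower x p) /\
  Rpower x (p + 1) * Amean x (Rpower x p) <= Lmean x (Rpower x p) ^ 3.
Proof.
  assert (Hp : 0 < Rpower x p) by apply exp_pos.
  rewrite Rpower_plus, Rpower_1 by exact hx.
  replace (Rpower x p * x) with (x * Rpower x p) by ring.
  split; [apply Hgen | apply Lgen]; assumption.
Qed.
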